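(* Let $n\ge1$, $p$ a prime, and for $m\ge1$ let $Y_m$ be the subspace of $\Sigma(n,p)$ spanned by all $\overline{B}_q$ where $q$ has at least $m$ components. Then for every $m\ge1$, $Y_m\,\mathcal{R}(n,p)\subseteq Y_{m+1}$, where $\mathcal{R}(n,p)$ is the radical of $\Sigma(n,p)$.
   Context: A composition of $n$ is a sequence of positive integers with sum $n$. The descent algebra $\Sigma_n$ has basis $\{B_q\}$ indexed by compositions of $n$ with multiplication $B_qB_r=\sum_{Z\in S(q,r)}B_{c(Z)}$, where for $q=[a_1,\dots,a_s]$, $r=[b_1,\dots,b_t]$, $S(q,r)$ is the set of $s\times t$ non-negative integer matrices with row sums $a_i$ and column sums $b_j$, and $c(Z)$ is the composition obtained by reading the entries of $Z$ row by row and omitting zeros. Let $\mathcal{Z}_n$ be the subring of integral combinations of the $B_q$ and $\Sigma(n,p)=\mathcal{Z}_n/p\mathcal{Z}_n$, an $\mathbb{F}_p$-algebra with basis $\overline{B}_q$ (images of $B_q$); $\mathcal{R}(n,p)$ denotes its (Jacobson) radical. For a subspace $Y$ and ideal $\mathcal{R}$, $Y\mathcal{R}$ denotes the span of all products $yx$ with $y\in Y$, $x\in\mathcal{R}$. *)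

(* Defs.v *)
From HB Require Import structures.
From mathcomp Require Import all_boot all_order all_algebra.
Set Implicit Arguments. Unset Strict Implicit. Unset Printing Implicit Defensive.
Import GRing.Theory.
Local Open Scope ring_scope.

Definition is_comp (n : nat) (s : seq nat) : bool :=
  all (fun a => 0 < a)%N s && (sumn s == n).

Fixpoint seqs_upto (k b : nat) : seq (seq nat) :=
  match k with
  | 0 => [:: [::]]
  | k'.+1 => [::] :: [seq a :: s | a <- iota 0 b.+1, s <- seqs_upto k' b]
  end.

Definition comps_list (n : nat) : seq (seq nat) :=
  undup (filter (is_comp n) (seqs_upto n n)).

Lemma mem_seqs_upto k b s :
  (size s <= k)%N -> all (fun a => a <= b)%N s -> s \in seqs_upto k b.
Proof.
elim: k s => [|k IH] [|a s] //.
move=> Hs /andP[Ha Hall].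
have -> : seqs_upto k.+1 b =
  [::] :: [seq x :: y | x <- iota 0 b.+1, y <- seqs_upto k b] by [].
rewrite in_cons; apply/orP; right.
apply: (allpairs_f (fun x y => x :: y)).
  by rewrite mem_iota add0n ltnS.
exact: IH.
Qed.

Lemma mem_comps_list n s : (s \in comps_list n) = is_comp n s.
Proof.
rewrite /comps_list mem_undup mem_filter.
case Hc: (is_comp n s) => //=.
move: Hc => /andP[Hpos /eqP Hsum].
apply: mem_seqs_upto.
  rewrite -Hsum; elim: s Hpos {Hsum} => //= a s IH /andP[Ha Hs].
  by rewrite -addn1 addnC leq_add // IH.
apply/allP => a Ha; rewrite -Hsum.
elim: s Ha {Hpos Hsum} => //= b s IH; rewrite in_cons => /orP[/eqP->|H].
  exact: leq_addr.
by rewrite (leq_trans (IH H)) // leq_addl.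
Qed.

Definition comp (n : nat) := seq_sub (comps_list n).

(* Structure constants: B_q B_r = \sum_{Z in S(q,r)} B_{c(Z)}.         *)
(* Entries of Z in S(q,r) are bounded by n (row sums are parts of q),  *)
(* so Z ranges over (size q) x (size r) matrices with entries in 'I_n.+1. *)
Section Descent.
Variable n : nat.

Definition row_sums s t (Z : 'M['I_n.+1]_(s, t)) : seq nat :=
  [seq (\sum_(j < t) (Z i j : nat))%N | i <- enum 'I_s].
Definition col_sums s t (Z : 'M['I_n.+1]_(s, t)) : seq nat :=
  [seq (\sum_(i < s) (Z i j : nat))%N | j <- enum 'I_t].
Definition read_Z s t (Z : 'M['I_n.+1]_(s, t)) : seq nat :=
  [seq a <- flatten [seq [seq (Z i j : nat) | j <- enum 'I_t] | i <- enum 'I_s]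
   | a != 0%N].

Definition struct_const (q r w : seq nat) : nat :=
  #|[pred Z : 'M['I_n.+1]_(size q, size r) |
      [&& row_sums Z == q, col_sums Z == r & read_Z Z == w]]|.

Variable p : nat.
Local Notation Sigma := {ffun comp n -> 'F_p}.

Definition sscale (c : 'F_p) (x : Sigma) : Sigma := [ffun w => c * x w].

Definition Bq (q : comp n) : Sigma := [ffun w => (w == q)%:R].

(* bilinear extension of B_q B_r = sum_{Z in S(q,r)} B_{c(Z)}, reduced mod p *)
Definition smul (u v : Sigma) : Sigma :=
  [ffun w : comp n => \sum_(q : comp n) \sum_(r : comp n)
      u q * v r * (struct_const (val q) (val r) (val w))%:R].

Definition left_ideal (L : {set Sigma}) : bool :=
  [&& 0 \in L,
      [forall x in L, forall y in L, x + y \in L],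
      [forall c : 'F_p, forall x in L, sscale c x \in L] &
      [forall a : Sigma, forall x in L, smul a x \in L]].

Definition max_left_ideal (L : {set Sigma}) : bool :=
  [&& left_ideal L, L != setT &
      [forall L' : {set Sigma},
         (left_ideal L' && (L \subset L') && (L' != setT)) ==> (L' == L)]].

Definition radical : {set Sigma} := \bigcap_(L | max_left_ideal L) L.

Definition span (S : {set Sigma}) : {set Sigma} :=
  [set v | [exists c : {ffun Sigma -> 'F_p}, v == \sum_(x in S) sscale (c x) x]].

Definition Y (m : nat) : {set Sigma} :=
  span [set Bq q | q : comp n & (m <= size (val q))%N].

Definition span_prod (A B : {set Sigma}) : {set Sigma} :=
  span [set smul y x | y in A, x in B].

End Descent.

(* Main.v *)
Require Import Defs.
From HB Require Import structures.
From mathcomp Require Import all_boot all_order all_algebra.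
From mathcomp Require Import ring.
Set Implicit Arguments. Unset Strict Implicit. Unset Printing Implicit Defensive.

Section Gen.
Variable n : nat.
Variable w : seq nat.
Hypothesis wpos : all (fun a => 0 < a) w.
Local Notation m := (size w).
Definition wi (i : 'I_m) := nth 0 w i.

Lemma wi_pos i : 0 < wi i.
Proof. by apply: (all_nthP 0 wpos); rewrite ltn_ord. Qed.

Lemma sum_wi : \sum_(i < m) wi i = sumn w.
Proof.
rewrite sumnE (big_nth 0) big_mkord; apply: eq_bigr => i _; by [].
Qed.

Definition good (A : finType) (U : A -> nat) (f : {ffun 'I_m -> A}) :=
  [forall a, (\sum_(i | f i == a) wi i == U a)].
Definition NN (A : finType) (U : A -> nat) := #|[pred f | good U f]|.

Lemma fiber_ge (A : finType) (g : {ffun 'I_m -> A}) i :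
  wi i <= \sum_(j | g j == g i) wi j.
Proof. by rewrite (bigD1 i) //= leq_addr. Qed.

Lemma NN_inj (A B : finType) (phi : A -> B) (UA : A -> nat) (UB : B -> nat) :
  injective phi -> (forall a, UB (phi a) = UA a) ->
  (forall b, UB b != 0 -> exists a, b = phi a) -> NN UA = NN UB.
Proof.
move=> phiI hU hR.
pose lift (f : {ffun 'I_m -> A}) := [ffun i => phi (f i)].
have liftI : injective lift.
  move=> f g /ffunP H; apply/ffunP => i; have := H i; rewrite !ffunE; exact: phiI.
rewrite /NN -(card_imset _ liftI); apply: eq_card => g /=.
rewrite inE; apply/imsetP/idP; last first.
- move=> /forallP gG.
  have hx : forall i, exists a, g i = phi a.
    move=> i; apply: hR; move: (gG (g i)) => /eqP <-.
    by rewrite -lt0n (leq_trans (wi_pos i)) // fiber_ge.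
  have [f0 hf0] := fin_all_exists hx.
  exists (finfun f0).
    rewrite inE /good; apply/forallP => a; move: (gG (phi a)); rewrite hU => /eqP <-.
    apply/eqP; apply: eq_bigl => i; by rewrite ffunE hf0 (inj_eq phiI).
  by apply/ffunP => i; rewrite !ffunE hf0.
- move=> [f]; rewrite inE /good => /forallP fG ->; apply/forallP => b.
  case: (pickP (fun a => phi a == b)) => [a /eqP <- | none].
    rewrite hU -(eqP (fG a)); apply/eqP; apply: eq_bigl => i.
    by rewrite ffunE (inj_eq phiI).
  rewrite big_pred0; last by move=> i; rewrite ffunE none.
  case: (boolP (UB b == 0)) => [/eqP -> // | /hR [a Ha]].
  by move: (none a); rewrite Ha eqxx.
Qed.
End Gen.

Lemma sumn_map_enum s (F : 'I_s -> nat) : sumn [seq F i | i <- enum 'I_s] = \sum_(i < s) F i.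
Proof. by rewrite sumnE big_map big_enum. Qed.

Lemma sum1_ord s : \sum_(i < s) 1 = s.
Proof. by rewrite sum1_card card_ord. Qed.

Lemma sumn_filter0 (l : seq nat) : sumn [seq a <- l | a != 0] = sumn l.
Proof. by elim: l => //= a l IH; case: eqP => [->|_] //=; rewrite IH. Qed.

Lemma eq_map_enumP s (F : 'I_s -> nat) l :
  reflect (size l = s /\ forall i, F i = nth 0 l i) ([seq F i | i <- enum 'I_s] == l).
Proof.
apply: (iffP eqP).
  move=> <-; split; first by rewrite size_map size_enum_ord.
  by move=> i; rewrite (nth_map i) ?nth_ord_enum // size_enum_ord.
move=> [hs hF]; apply: (eq_from_nth (x0:=0)); first by rewrite size_map size_enum_ord.
move=> k; rewrite size_map size_enum_ord => hk.
rewrite (nth_map (Ordinal hk)) ?size_enum_ord //.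
have := nth_ord_enum (Ordinal hk) (Ordinal hk) => /= ->; exact: hF.
Qed.

Section Mat.
Variable n : nat.
Variables s t : nat.
Implicit Type Z : 'M['I_n.+1]_(s, t).

Definition rowsum Z (i : 'I_s) := (\sum_(j < t) (Z i j : nat))%N.
Definition colsum Z (j : 'I_t) := (\sum_(i < s) (Z i j : nat))%N.
Definition rowL Z (i : 'I_s) := [seq a <- [seq (Z i j : nat) | j <- enum 'I_t] | a != 0].

Lemma row_sumsE Z : row_sums Z = [seq rowsum Z i | i <- enum 'I_s].
Proof. by []. Qed.
Lemma col_sumsE Z : col_sums Z = [seq colsum Z j | j <- enum 'I_t].
Proof. by []. Qed.

Lemma read_flat Z : read_Z Z = flatten [seq rowL Z i | i <- enum 'I_s].
Proof. by rewrite /read_Z filter_flatten -map_comp. Qed.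

Lemma sumn_rowL Z i : sumn (rowL Z i) = rowsum Z i.
Proof. by rewrite /rowL sumn_filter0 sumn_map_enum. Qed.

Lemma size_read Z : size (read_Z Z) = \sum_(i < s) size (rowL Z i).
Proof. by rewrite read_flat size_flatten /shape -map_comp sumn_map_enum. Qed.

Lemma sumn_read Z : sumn (read_Z Z) = \sum_(i < s) rowsum Z i.
Proof.
rewrite read_flat sumn_flatten -map_comp -sumn_map_enum; congr sumn.
by apply: eq_map => i /=; rewrite sumn_rowL.
Qed.

Lemma read_pos Z : all (fun a => 0 < a) (read_Z Z).
Proof. by rewrite /read_Z; apply/allP => a; rewrite mem_filter lt0n => /andP[]. Qed.

Lemma rowL_pos Z i : 0 < rowsum Z i -> 0 < size (rowL Z i).
Proof. by move: (sumn_rowL Z i); case: (rowL Z i) => //= <-. Qed.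

Lemma read_ge Z : (forall i, 0 < rowsum Z i) -> s <= size (read_Z Z).
Proof.
move=> hp; rewrite size_read -{1}(sum1_ord s); apply: leq_sum => i _; exact: rowL_pos.
Qed.

Lemma read_eq Z : (forall i, 0 < rowsum Z i) -> size (read_Z Z) <= s ->
  forall i, size (rowL Z i) = 1.
Proof.
move=> hp hs.
have H : \sum_(i < s) (size (rowL Z i) - 1) == 0.
  rewrite sumnB; last by move=> i _; exact: rowL_pos.
  by rewrite sum1_ord -size_read subn_eq0.
move: H; rewrite sum_nat_eq0 => /forallP H i.
have /= := H i; rewrite subn_eq0 => h1; apply/eqP; rewrite eqn_leq h1; exact: rowL_pos.
Qed.

Lemma rowL1 Z i : size (rowL Z i) = 1 -> rowL Z i = [:: rowsum Z i].
Proof. by move: (sumn_rowL Z i); case: (rowL Z i) => // a [] //= <- _; rewrite addn0. Qed.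

Lemma rowL1' Z i : size (rowL Z i) = 1 ->
  exists j, (Z i j : nat) = rowsum Z i /\ forall j', j' != j -> (Z i j' : nat) = 0.
Proof.
move=> h; have h2 := rowL1 h; move: h2 h.
rewrite /rowL filter_map size_map.
case E: [seq x <- enum 'I_t | (fun a : nat => a != 0) (Z i x : nat)] => [//|j [|//]] /= [<-] _.
exists j; split => // j' nj; apply/eqP; apply/negPn/negP => nz.
have : j' \in [seq x <- enum 'I_t | (fun a : nat => a != 0) (Z i x : nat)].
  by rewrite mem_filter nz mem_enum.
by rewrite E inE (negbTE nj).
Qed.

End Mat.

Lemma lemA n (q r u : seq nat) : all (fun a => 0 < a) q ->
  0 < struct_const n q r u -> size u <= size q -> u = q.
Proof.
move=> qpos /card_gt0P [Z]; rewrite inE => /and3P [/eq_map_enumP [_ hrow] _ /eqP hread] hs.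
have hp : forall i, 0 < rowsum Z i.
  move=> i; rewrite /rowsum hrow; apply: (all_nthP 0 qpos); by rewrite ltn_ord.
have hge := read_ge hp.
have h1 := read_eq hp (leq_trans (eq_leq (congr1 size hread)) hs).
rewrite -hread read_flat.
under eq_map do rewrite rowL1 ?h1 //.
by rewrite flatten_map1; apply/eqP/eq_map_enumP; split.
Qed.

Section Char.
Variable n : nat.
Variable w : seq nat.
Hypothesis wpos : all (fun a => 0 < a) w.
Hypothesis wsum : sumn w = n.
Local Notation m := (size w).
Local Notation wi := (@wi w).

Lemma wi_le i : wi i <= n.
Proof. by rewrite -wsum -sum_wi (bigD1 i) //= leq_addr. Qed.

Variable u : seq nat.
Local Notation t := (size u).

Definition Zof (f : {ffun 'I_m -> 'I_t}) : 'M['I_n.+1]_(m, t) :=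
  \matrix_(i, j) (if f i == j then inord (wi i) else ord0).

Lemma Zof_val f i j : (Zof f i j : nat) = if f i == j then wi i else 0.
Proof. by rewrite mxE; case: eqP => _ //; rewrite inordK // ltnS wi_le. Qed.

Lemma Zof_inj : injective Zof.
Proof.
move=> f g H; apply/ffunP => i.
have := congr1 (fun Z : 'M['I_n.+1]_(m, t) => (Z i (f i) : nat)) H.
rewrite /= !Zof_val eqxx; case: eqP => [//|_] h.
by move: (wi_pos wpos i); rewrite h.
Qed.

Lemma rowsum_Zof f i : rowsum (Zof f) i = wi i.
Proof.
rewrite /rowsum (eq_bigr (fun j => if f i == j then wi i else 0)); last by move=> j _; rewrite Zof_val.
rewrite -big_mkcond /= (eq_bigl (fun j => j == f i)); last by move=> j; rewrite eq_sym.
by rewrite big_pred1_eq.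
Qed.

Lemma colsum_Zof f k : colsum (Zof f) k = \sum_(i | f i == k) wi i.
Proof.
rewrite /colsum (eq_bigr (fun i => if f i == k then wi i else 0)); last by move=> i _; rewrite Zof_val.
by rewrite -big_mkcond.
Qed.

Lemma read_Zof f : read_Z (Zof f) = w.
Proof.
rewrite read_flat.
have -> : [seq rowL (Zof f) i | i <- enum 'I_m] = [seq [:: wi i] | i <- enum 'I_m].
  apply: eq_map => i; rewrite /rowL.
  under eq_map do rewrite Zof_val.
  rewrite filter_map (eq_filter (a2 := pred1 (f i))); last first.
    move=> j /=; rewrite [j == f i]eq_sym; case: (f i == j) => //=; by rewrite -lt0n wi_pos.
  by rewrite filter_pred1_uniq ?enum_uniq ?mem_enum //= eqxx.
rewrite flatten_map1; apply/eqP/eq_map_enumP; by split.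
Qed.

Lemma char : struct_const n w u w = NN w (fun k : 'I_t => nth 0 u k).
Proof.
rewrite /struct_const /NN -(card_imset _ Zof_inj); apply: eq_card => Z; rewrite inE.
apply/idP/imsetP.
- move=> /and3P [/eq_map_enumP [_ hr] /eq_map_enumP [_ hc] /eqP hrd].
  have hp : forall i, 0 < rowsum Z i by move=> i; rewrite /rowsum hr wi_pos.
  have h1 := read_eq hp (eq_leq (congr1 size hrd)).
  have hx : forall i, exists j, (Z i j : nat) = rowsum Z i /\ forall j', j' != j -> (Z i j' : nat) = 0.
    move=> i; exact: rowL1' (h1 i).
  have [f0 hf0] := fin_all_exists hx.
  have hZ : Z = Zof (finfun f0).
    apply/matrixP => i j; apply: val_inj; rewrite /= Zof_val ffunE.
    have [e1 e2] := hf0 i; case: eqP => [<-|ne]; first by rewrite e1 /rowsum hr.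
    by apply: e2; apply/eqP => E; apply: ne.
  exists (finfun f0) => //; rewrite inE /good; apply/forallP => k.
  by rewrite -hc; apply/eqP; have := colsum_Zof (finfun f0) k; rewrite -hZ /colsum => <-.
- move=> [f]; rewrite inE /good => /forallP hg ->.
  apply/and3P; split.
  + apply/eq_map_enumP; split => // i; exact: rowsum_Zof.
  + apply/eq_map_enumP; split => // k; have := colsum_Zof f k; rewrite /colsum => ->; exact/eqP/hg.
  + by rewrite read_Zof.
Qed.
End Char.

Section Regroup.
Variable n : nat.
Variables q r : seq nat.
Hypothesis hq : is_comp n q.
Local Notation s := (size q).
Local Notation t := (size r).
Definition SS (Z : 'M['I_n.+1]_(s, t)) := (row_sums Z == q) && (col_sums Z == r).

Lemma read_comp (Z : 'M['I_n.+1]_(s, t)) : SS Z -> read_Z Z \in comps_list n.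
Proof.
move=> /andP [/eqP hr _]; rewrite mem_comps_list /is_comp read_pos /=.
move: hq => /andP [_ /eqP hs].
by rewrite sumn_read -sumn_map_enum -row_sumsE hr hs.
Qed.

Lemma regroup (G : seq nat -> nat) :
  \sum_(u : Defs.comp n) struct_const n q r (val u) * G (val u) =
  \sum_(Z : 'M['I_n.+1]_(s, t) | SS Z) G (read_Z Z).
Proof.
rewrite /struct_const.
under eq_bigr do rewrite -sum1_card big_distrl /=.
rewrite (exchange_big_dep SS) /=; last by move=> u Z _ /and3P [h1 h2 _]; rewrite /SS h1 h2.
apply: eq_bigr => Z hZ.
pose u0 : Defs.comp n := SeqSub (read_comp hZ).
rewrite (eq_bigl (fun u => u == u0)); last first.
  move=> u; rewrite inE; have /andP [-> ->] /= := hZ.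
  apply/eqP/eqP => [h|->]; last by [].
  by apply: val_inj; rewrite /= h.
by rewrite big_pred1_eq mul1n.
Qed.
End Regroup.

Section Pair.
Variable n : nat.
Variable w : seq nat.
Hypothesis wpos : all (fun a => 0 < a) w.
Hypothesis wsum : sumn w = n.
Local Notation m := (size w).
Local Notation wi := (@wi w).

Lemma Npair s t (Z : 'M['I_n.+1]_(s, t)) :
  NN w (fun k : 'I_(size (read_Z Z)) => nth 0 (read_Z Z) k) =
  NN w (fun ij : 'I_s * 'I_t => (Z ij.1 ij.2 : nat)).
Proof.
set Zf := fun ij : 'I_s * 'I_t => (Z ij.1 ij.2 : nat).
set L := [seq (i, j) | i <- enum 'I_s, j <- enum 'I_t].
set P := [seq ij <- L | Zf ij != 0].
have hread : read_Z Z = [seq Zf ij | ij <- P].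
  have hL : [seq Zf ij | ij <- L] =
    flatten [seq [seq (Z i j : nat) | j <- enum 'I_t] | i <- enum 'I_s].
    by rewrite /L map_allpairs.
  by rewrite /read_Z -hL filter_map.
have hsz : size (read_Z Z) = size P by rewrite hread size_map.
have uP : uniq P.
  apply: filter_uniq; apply: allpairs_uniq; rewrite ?enum_uniq //.
  by move=> [a b] [c d] _ _ /=.
have ti : injective (tnth (in_tuple P)) by apply/tuple_uniqP.
pose phi k := tnth (in_tuple P) (cast_ord hsz k).
apply: (NN_inj wpos (phi := phi)).
- by move=> k1 k2 /ti /cast_ord_inj.
- move=> k; transitivity (nth 0 [seq Zf ij | ij <- P] k); last by rewrite -hread.
  rewrite (nth_map (phi k)); last by rewrite -hsz.
  rewrite /phi (tnth_nth (phi k)) /=; congr Zf; apply: set_nth_default; by rewrite -hsz.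
- move=> b nz.
  have bP : b \in P.
    rewrite mem_filter nz /=; case: b nz => b1 b2 _.
    by apply: allpairs_f; rewrite mem_enum.
  have hi : index b P < size (read_Z Z) by rewrite hsz index_mem.
  exists (Ordinal hi); rewrite /phi (tnth_nth b) /=.
  by rewrite nth_index.
Qed.

Variables s t : nat.
Implicit Type F : {ffun 'I_m -> 'I_s * 'I_t}.

Definition ZF F : 'M['I_n.+1]_(s, t) :=
  \matrix_(j, k) inord (\sum_(i | F i == (j, k)) wi i).

Lemma ZF_val F j k : (ZF F j k : nat) = \sum_(i | F i == (j, k)) wi i.
Proof.
rewrite mxE inordK // ltnS -wsum -sum_wi [X in _ <= X](bigID (fun i => F i == (j, k))) /=.
exact: leq_addr.
Qed.

Lemma goodZF F (Z : 'M['I_n.+1]_(s, t)) :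
  good (fun ij : 'I_s * 'I_t => (Z ij.1 ij.2 : nat)) F = (ZF F == Z).
Proof.
apply/forallP/eqP.
  move=> H; apply/matrixP => j k; apply: val_inj; rewrite /= ZF_val.
  exact/eqP/(H (j, k)).
by move=> <- [j k]; rewrite /= ZF_val.
Qed.

Lemma sum_Npair (SP : pred 'M['I_n.+1]_(s, t)) :
  \sum_(Z | SP Z) NN w (fun ij : 'I_s * 'I_t => (Z ij.1 ij.2 : nat)) =
  #|[pred F | SP (ZF F)]|.
Proof.
rewrite -sum1_card (partition_big ZF SP) //=.
apply: eq_bigr => Z hZ; rewrite /NN -sum1_card; apply: eq_bigl => F.
rewrite !inE goodZF; case: eqP => [->|_]; by rewrite ?hZ ?andbF.
Qed.

Lemma rowsum_ZF F j : rowsum (ZF F) j = \sum_(i | (F i).1 == j) wi i.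
Proof.
rewrite /rowsum (eq_bigr (fun k => \sum_(i | F i == (j, k)) wi i)); last by move=> k _; rewrite ZF_val.
under eq_bigr do rewrite big_mkcond /=.
rewrite exchange_big /= [RHS]big_mkcond /=; apply: eq_bigr => i _.
case E: ((F i).1 == j).
  rewrite (bigD1 (F i).2) //= -{1}(eqP E) -surjective_pairing eqxx big1 ?addn0 //.
  move=> k nk; case: eqP => // h; by move: nk; rewrite h eqxx.
by apply: big1 => k _; case: eqP => // h; move: E; rewrite h eqxx.
Qed.

Lemma colsum_ZF F k : colsum (ZF F) k = \sum_(i | (F i).2 == k) wi i.
Proof.
rewrite /colsum (eq_bigr (fun j => \sum_(i | F i == (j, k)) wi i)); last by move=> j _; rewrite ZF_val.
under eq_bigr do rewrite big_mkcond /=.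
rewrite exchange_big /= [RHS]big_mkcond /=; apply: eq_bigr => i _.
case E: ((F i).2 == k).
  rewrite (bigD1 (F i).1) //= -{1}(eqP E) -surjective_pairing eqxx big1 ?addn0 //.
  move=> j nj; case: eqP => // h; by move: nj; rewrite h eqxx.
by apply: big1 => j _; case: eqP => // h; move: E; rewrite h eqxx.
Qed.
End Pair.

Lemma card_pair m s t (PA : pred {ffun 'I_m -> 'I_s}) (PB : pred {ffun 'I_m -> 'I_t}) :
  #|[pred F : {ffun 'I_m -> 'I_s * 'I_t} |
      PA [ffun i => (F i).1] && PB [ffun i => (F i).2]]| = #|PA| * #|PB|.
Proof.
pose pairF (fh : {ffun 'I_m -> 'I_s} * {ffun 'I_m -> 'I_t}) :=
  [ffun i => (fh.1 i, fh.2 i)].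
have pI : injective pairF.
  move=> [f1 h1] [f2 h2] /ffunP H; congr pair; apply/ffunP => i;
  have := H i; rewrite !ffunE => -[]//.
rewrite -cardX -(card_imset _ pI); apply: eq_card => F; rewrite !inE.
apply/idP/imsetP; last first.
- move=> [[f h]]; rewrite inE /= => /andP [hf hh] ->.
  have -> : [ffun i => (pairF (f, h) i).1] = f by apply/ffunP => i; rewrite !ffunE.
  have -> : [ffun i => (pairF (f, h) i).2] = h by apply/ffunP => i; rewrite !ffunE.
  by apply/andP.
- move=> /andP [hf hh]; exists ([ffun i => (F i).1], [ffun i => (F i).2]).
    by rewrite inE; apply/andP.
  by apply/ffunP => i; rewrite !ffunE -surjective_pairing.
Qed.

Section Mult.
Variable n : nat.
Variable w : seq nat.
Hypothesis wpos : all (fun a => 0 < a) w.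
Hypothesis wsum : sumn w = n.
Local Notation m := (size w).
Variables q r : seq nat.
Hypothesis hq : is_comp n q.
Local Notation s := (size q).
Local Notation t := (size r).

Lemma SS_ZF (F : {ffun 'I_m -> 'I_s * 'I_t}) :
  @SS n q r (ZF n F) =
  good (fun j : 'I_s => nth 0 q j) [ffun i => (F i).1] &&
  good (fun k : 'I_t => nth 0 r k) [ffun i => (F i).2].
Proof.
rewrite /SS; congr andb.
  apply/eq_map_enumP/forallP.
    move=> [_ H] j; under eq_bigl do rewrite ffunE.
    by rewrite -(rowsum_ZF wsum); apply/eqP; exact: H.
  move=> H; split => // j; have := H j; under eq_bigl do rewrite ffunE.
  by rewrite -(rowsum_ZF wsum) => /eqP.
apply/eq_map_enumP/forallP.
  move=> [_ H] j; under eq_bigl do rewrite ffunE.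
  by rewrite -(colsum_ZF wsum); apply/eqP; exact: H.
move=> H; split => // j; have := H j; under eq_bigl do rewrite ffunE.
by rewrite -(colsum_ZF wsum) => /eqP.
Qed.

Lemma mult :
  \sum_(u : Defs.comp n) struct_const n q r (val u) * struct_const n w (val u) w =
  struct_const n w q w * struct_const n w r w.
Proof.
rewrite (regroup r hq (fun v => struct_const n w v w)).
under eq_bigr do rewrite (char wpos wsum) (Npair wpos).
rewrite (sum_Npair wsum).
rewrite (eq_card (B := [pred F : {ffun 'I_m -> 'I_s * 'I_t} |
      good (fun j : 'I_s => nth 0 q j) [ffun i => (F i).1] &&
      good (fun k : 'I_t => nth 0 r k) [ffun i => (F i).2]])); last first.
  by move=> F; rewrite !inE SS_ZF.
by rewrite card_pair !(char wpos wsum).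
Qed.
End Mult.
Import GRing.Theory.

Section Alg.
Variables n p : nat.
Hypothesis hn : (0 < n)%N.
Local Notation Sigma := {ffun Defs.comp n -> 'F_p}.
Local Open Scope ring_scope.

Lemma comp_is (u : Defs.comp n) : is_comp n (val u).
Proof. by rewrite -mem_comps_list; exact: valP. Qed.
Lemma comp_pos (u : Defs.comp n) : all (fun a => 0 < a)%N (val u).
Proof. by case/andP: (comp_is u). Qed.
Lemma comp_sum (u : Defs.comp n) : sumn (val u) = n.
Proof. by case/andP: (comp_is u) => _ /eqP. Qed.

Definition cc (q r w : Defs.comp n) : 'F_p := (struct_const n (val q) (val r) (val w))%:R.

Definition theta (w : Defs.comp n) (v : Sigma) : 'F_p :=
  \sum_(u : Defs.comp n) v u * cc w u w.

Lemma theta_mul w (a x : Sigma) : theta w (smul a x) = theta w a * theta w x.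
Proof.
rewrite /theta.
transitivity (\sum_(q : Defs.comp n) \sum_(r : Defs.comp n) a q * x r *
   (\sum_(u : Defs.comp n) struct_const n (val q) (val r) (val u) *
      struct_const n (val w) (val u) (val w))%N%:R).
  under eq_bigr do rewrite ffunE mulr_suml.
  rewrite exchange_big /=; apply: eq_bigr => q _.
  under eq_bigr do rewrite mulr_suml.
  rewrite exchange_big /=; apply: eq_bigr => r _.
  rewrite natr_sum mulr_sumr; apply: eq_bigr => u _.
  by rewrite natrM /cc mulrA.
rewrite mulr_suml; apply: eq_bigr => q _.
rewrite mulr_sumr; apply: eq_bigr => r _.
rewrite (mult (comp_pos w) (comp_sum w) _ (comp_is q)) natrM /cc.
ring.
Qed.

Lemma theta_add w (x y : Sigma) : theta w (x + y) = theta w x + theta w y.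
Proof. by rewrite /theta -big_split; apply: eq_bigr => u _; rewrite ffunE mulrDl. Qed.

Lemma theta_scale w c (x : Sigma) : theta w (sscale c x) = c * theta w x.
Proof. by rewrite /theta mulr_sumr; apply: eq_bigr => u _; rewrite ffunE mulrA. Qed.

Lemma theta0 w : theta w 0 = 0.
Proof. by rewrite /theta big1 // => u _; rewrite ffunE mul0r. Qed.

Lemma mem_n : [:: n] \in comps_list n.
Proof. by rewrite mem_comps_list /is_comp /= hn addn0 eqxx. Qed.
Definition un : Defs.comp n := SeqSub mem_n.

Lemma c_n (w : Defs.comp n) : struct_const n (val w) [:: n] (val w) = 1%N.
Proof.
rewrite (char (comp_pos w) (comp_sum w)) /NN.
transitivity #|{ffun 'I_(size (val w)) -> 'I_1}|; last by rewrite card_ffun !card_ord exp1n.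
apply: eq_card => f; rewrite !inE /good; apply/forallP => a /=.
rewrite (eq_bigl predT); last by move=> i; rewrite [f i]ord1 [a]ord1 eqxx.
by rewrite sum_wi comp_sum [a]ord1.
Qed.

Lemma theta_un w : theta w (Bq p un) = 1.
Proof.
rewrite /theta (bigD1 un) //= big1 ?addr0.
  by rewrite ffunE eqxx mul1r /cc c_n.
by move=> u nu; rewrite ffunE (negbTE nu) mul0r.
Qed.

Definition K w : {set Sigma} := [set v | theta w v == 0].

Lemma K_left w : left_ideal (K w).
Proof.
rewrite /left_ideal; apply/and4P; split.
- by rewrite inE theta0.
- apply/forallP => x; apply/implyP; rewrite inE => /eqP hx.
  apply/forallP => y; apply/implyP; rewrite inE => /eqP hy.
  by rewrite inE theta_add hx hy addr0.
- apply/forallP => c; apply/forallP => x; apply/implyP; rewrite inE => /eqP hx.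
  by rewrite inE theta_scale hx mulr0.
- apply/forallP => a; apply/forallP => x; apply/implyP; rewrite inE => /eqP hx.
  by rewrite inE theta_mul hx mulr0.
Qed.

Lemma K_max w : max_left_ideal (K w).
Proof.
rewrite /max_left_ideal; apply/and3P; split.
- exact: K_left.
- apply/eqP => H; have : Bq p un \in K w by rewrite H inE.
  by rewrite inE theta_un oner_eq0.
apply/forallP => L; apply/implyP => /andP [/andP [hl hsub] hne].
move: hl => /and4P [_ /forallP hadd /forallP hsc _].
rewrite eqEsubset hsub andbT; apply/subsetP => x hx; rewrite inE.
apply/negPn/negP => nz; move/negP: hne; apply; apply/eqP/setP => a.
rewrite inE; set c := theta w x; set t := theta w a / c.
have e : a = (a + sscale (- t) x) + sscale t x.
  apply/ffunP => u; rewrite !ffunE; ring.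
have h1 : a + sscale (- t) x \in L.
  apply: (subsetP hsub); rewrite inE theta_add theta_scale -/c /t.
  by rewrite mulNr divfK // subrr.
have h2 : sscale t x \in L by move: (hsc t) => /forallP /(_ x) /implyP; apply.
rewrite e; move: (hadd (a + sscale (- t) x)) => /implyP /(_ h1) /forallP /(_ (sscale t x)) /implyP.
by apply.
Qed.

Lemma rad_theta w x : x \in radical n p -> theta w x = 0.
Proof. by move/bigcapP => H; have := H _ (K_max w); rewrite inE => /eqP. Qed.
End Alg.

Section Fin.
Variables n p : nat.
Local Notation Sigma := {ffun Defs.comp n -> 'F_p}.
Local Open Scope ring_scope.

Definition vanish k (v : Sigma) := forall w : Defs.comp n, (size (val w) < k)%N -> v w = 0.

Lemma span_vanish k (S : {set Sigma}) v :
  (forall x, x \in S -> vanish k x) -> v \in Defs.span S -> vanish k v.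
Proof.
move=> H; rewrite inE => /existsP [c /eqP ->] w hw.
rewrite sum_ffunE big1 // => x hx; by rewrite ffunE (H x hx w hw) mulr0.
Qed.

Lemma Y_vanish m v : v \in Y n p m -> vanish m v.
Proof.
apply: span_vanish => x /imsetP [q hq ->] w hw; rewrite ffunE.
case: eqP => // E; move: hq; rewrite inE -E => hq.
by move: (leq_trans hw hq); rewrite ltnn.
Qed.

Lemma Bq_inj : injective (@Bq n p).
Proof.
move=> q1 q2 H; have := congr1 (fun f : Sigma => f q1) H; rewrite !ffunE eqxx.
by case: eqP => // _ /eqP; rewrite eq_sym oner_eq0.
Qed.

Lemma vanish_Y m v : vanish m.+1 v -> v \in Y n p m.+1.
Proof.
move=> hv; rewrite /Y /Defs.span inE; apply/existsP.
exists [ffun x : Sigma => \sum_(q : Defs.comp n) (x == Bq p q)%:R * v q].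
apply/eqP/ffunP => w; rewrite sum_ffunE big_imset /=; last by move=> a b _ _; apply: Bq_inj.
have hc : forall q, [ffun x : Sigma => \sum_(q : Defs.comp n) (x == Bq p q)%:R * v q] (Bq p q) = v q.
  move=> q; rewrite ffunE (bigD1 q) //= eqxx mul1r big1 ?addr0 //.
  move=> q' nq; rewrite (inj_eq Bq_inj) eq_sym (negbTE nq) mul0r //.
under eq_bigr do rewrite ffunE hc ffunE.
case: (boolP (m.+1 <= size (val w)))%N => hw.
  rewrite (bigD1 w) /=; last by rewrite inE.
  rewrite eqxx mulr1 big1 ?addr0 // => q /andP [_ nq].
  by rewrite eq_sym (negbTE nq) mulr0.
rewrite big1; first by rewrite hv // ltnNge.
move=> q; rewrite inE => hq; case: eqP => [E|_]; last by rewrite mulr0.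
by move: hw; rewrite E hq.
Qed.

Lemma prod_vanish (hn : (0 < n)%N) m (y x : Sigma) : vanish m y -> x \in radical n p -> vanish m.+1 (smul y x).
Proof.
move=> hy hx w hw; rewrite ffunE (bigD1 w) //= [X in _ + X]big1 ?addr0.
  have -> : \sum_(r : Defs.comp n) y w * x r * (struct_const n (val w) (val r) (val w))%:R =
            y w * theta w x.
    by rewrite /theta mulr_sumr; apply: eq_bigr => r _; rewrite mulrA.
  by rewrite (rad_theta hn) // mulr0.
move=> q nq; apply: big1 => r _.
case: (ltnP (size (val q)) m) => hq; first by rewrite hy // !mul0r.
case E: (struct_const n (val q) (val r) (val w)) => [|k]; first by rewrite mulr0.
have : val w = val q.
  apply: (lemA (n := n) (r := val r) (comp_pos q)); first by rewrite E.
  by apply: leq_trans hq; rewrite -ltnS.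
by move/val_inj => e; move: nq; rewrite e eqxx.
Qed.
End Fin.

Theorem lemma3p1 (n p : nat) : (0 < n)%N -> prime p ->
  forall m : nat, (0 < m)%N ->
    span_prod (Y n p m) (radical n p) \subset Y n p m.+1.
Proof.
move=> hn hp m hm; apply/subsetP => v hv; apply: vanish_Y.
apply: (span_vanish _ hv) => z /imset2P [y x hy hx ->].
apply: (prod_vanish hn) => //; exact: Y_vanish.
Qed.
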